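(* Let $N\ge5$, $N\not\equiv1\pmod3$. For a generic twisted $(N,1)$ spiral, the shift map satisfies $\mathcal S(A_i)=A_{i+1}$ for $i=0,1,\dots,N-2$; that is, $\widehat c_{i+1}+\widehat a_{i+1}\widehat b_i=c_{i+1}+a_{i+1}b_i$ for these $i$.
   Context: Points lie in $\mathbb{RP}^2$; $M\in PSL(3,\mathbb R)$ is identified with a representing matrix in $SL(3,\mathbb R)$. For a bi-infinite sequence $(p_k)_{k\in\mathbb Z}$ in $\mathbb{RP}^2$, $T(p_k)=\overline{p_{k-1}p_{k+1}}\cap\overline{p_kp_{k+2}}$. A twisted $(N,1)$ pentagram spiral with monodromy $M$ is a bi-infinite sequence $(p_k)$ with $p_{N+k}=M\cdot T(p_{k-1})$ for all $k$, such that $p_{N+1}$ lies on the segment joining $p_N$ and $M\cdot p_1$; its seed is $\{p_1,\dots,p_N;p_{N+1}\}$; ''generic'' means all determinants and denominators appearing are nonzero. For vectors define $T(V_i)=(V_{i-1}\times V_{i+1})\times(V_i\times V_{i+2})$, $\overline T(V_i)=c_{i+1}(V_i\times V_{i+1})\times(V_{i-2}\times V_{i-1})$, $c_i=\det(V_{i+1},V_{i+2},V_{i+3})/\det(V_i,V_{i+1},V_{i+2})$. The normalized lift is the unique sequence $V_k$ with $[V_k]=p_k$, $V_{N+i}=MT(V_{i-1})$ and $V_{-i}=M^{-1}\overline T(V_{N-i+1})$ for $i\ge1$, and $\det(V_i,V_{i+1},V_{i+2})=1$ for $i=0,\dots,N$. Invariants: $V_{i+3}=a_iV_{i+2}+b_iV_{i+1}+c_iV_i$;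 $A_i=c_i+a_ib_{i-1}$. The shift map $\mathcal S$ sends the spiral to the same sequence with seed $\{p_2,\dots,p_{N+1};p_{N+2}\}$, whose normalized lift $(\widehat V_i)$ satisfies $[\widehat V_i]=p_i$, $\det(\widehat V_i,\widehat V_{i+1},\widehat V_{i+2})=1$ for $i=1,\dots,N+1$, $\widehat V_{N+1+i}=MT(\widehat V_i)$, $\widehat V_{1-i}=M^{-1}\overline T(\widehat V_{N+2-i})$ for $i\ge1$; hatted invariants are defined by $\widehat V_{i+3}=\widehat a_i\widehat V_{i+2}+\widehat b_i\widehat V_{i+1}+\widehat c_i\widehat V_i$. In coordinates $\mathcal S(a_i)=\widehat a_{i+1}$, $\mathcal S(b_i)=\widehat b_{i+1}$, $\mathcal S(c_i)=\widehat c_{i+1}$. *)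

(* Defs.v *)
From Stdlib Require Import Reals ZArith Lra.
Open Scope R_scope.

Record vec := mkV { vx : R; vy : R; vz : R }.

Definition vzero : vec := mkV 0 0 0.
Definition vadd (u v : vec) : vec := mkV (vx u + vx v) (vy u + vy v) (vz u + vz v).
Definition vscale (l : R) (u : vec) : vec := mkV (l * vx u) (l * vy u) (l * vz u).
Definition cross (u v : vec) : vec :=
  mkV (vy u * vz v - vz u * vy v)
      (vz u * vx v - vx u * vz v)
      (vx u * vy v - vy u * vx v).
Definition dot (u v : vec) : R := vx u * vx v + vy u * vy v + vz u * vz v.
Definition det3 (u v w : vec) : R := dot u (cross v w).

Record mat := mkM { m11 : R; m12 : R; m13 : R;
                    m21 : R; m22 : R; m23 : R;
                    m31 : R; m32 : R; m33 : R }.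
Definition mapply (M : mat) (u : vec) : vec :=
  mkV (m11 M * vx u + m12 M * vy u + m13 M * vz u)
      (m21 M * vx u + m22 M * vy u + m23 M * vz u)
      (m31 M * vx u + m32 M * vy u + m33 M * vz u).
Definition mdet (M : mat) : R :=
  m11 M * (m22 M * m33 M - m23 M * m32 M)
  - m12 M * (m21 M * m33 M - m23 M * m31 M)
  + m13 M * (m21 M * m32 M - m22 M * m31 M).

(* A point of RP^2 is represented by a nonzero vector; [u] = [v] iff proportional. *)
Definition proj_eq (u v : vec) : Prop := exists l : R, l <> 0 /\ u = vscale l v.

Close Scope R_scope.
Open Scope Z_scope.

Definition Tmap (V : Z -> vec) (i : Z) : vec :=
  cross (cross (V (i - 1)) (V (i + 1))) (cross (V i) (V (i + 2))).

Definition cinv (V : Z -> vec) (i : Z) : R :=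
  Rdiv (det3 (V (i + 1)) (V (i + 2)) (V (i + 3))) (det3 (V i) (V (i + 1)) (V (i + 2))).

Definition Tbar (V : Z -> vec) (i : Z) : vec :=
  vscale (cinv V (i + 1)) (cross (cross (V i) (V (i + 1))) (cross (V (i - 2)) (V (i - 1)))).

Definition twisted_spiral (N : Z) (M : mat) (p : Z -> vec) : Prop :=
  (forall k, p k <> vzero) /\
  (forall k, proj_eq (p (N + k)) (mapply M (Tmap p (k - 1)))) /\
  (exists s t : R, Rle 0 s /\ Rle 0 t /\
     proj_eq (p (N + 1)) (vadd (vscale s (p N)) (vscale t (mapply M (p 1))))).

Definition generic_spiral (p : Z -> vec) : Prop :=
  forall i, det3 (p i) (p (i + 1)) (p (i + 2)) <> 0%R.

Definition normalized_lift (N : Z) (M : mat) (p V : Z -> vec) : Prop :=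
  (forall k, proj_eq (V k) (p k)) /\
  (forall i, 1 <= i -> V (N + i) = mapply M (Tmap V (i - 1))) /\
  (forall i, 1 <= i -> mapply M (V (- i)) = Tbar V (N - i + 1)) /\
  (forall i, 0 <= i <= N -> det3 (V i) (V (i + 1)) (V (i + 2)) = 1%R).

Definition shifted_normalized_lift (N : Z) (M : mat) (p W : Z -> vec) : Prop :=
  (forall k, proj_eq (W k) (p k)) /\
  (forall i, 1 <= i <= N + 1 -> det3 (W i) (W (i + 1)) (W (i + 2)) = 1%R) /\
  (forall i, 1 <= i -> W (N + 1 + i) = mapply M (Tmap W i)) /\
  (forall i, 1 <= i -> mapply M (W (1 - i)) = Tbar W (N + 2 - i)).

Definition invariants (V : Z -> vec) (a b c : Z -> R) : Prop :=
  forall i, V (i + 3) = vadd (vscale (a i) (V (i + 2)))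
                        (vadd (vscale (b i) (V (i + 1))) (vscale (c i) (V i))).

(* Main.v *)
Require Import Defs.
From Stdlib Require Import Reals ZArith Lia Lra.
Open Scope R_scope.

Lemma key (x y z w : vec) (a b c : R) :
  w = vadd (vscale a z) (vadd (vscale b y) (vscale c x)) ->
  det3 x y w = a * det3 x y z /\ det3 x w z = b * det3 x y z /\
  det3 w y z = c * det3 x y z.
Proof.
  intros ->; destruct x, y, z; unfold det3, dot, cross, vadd, vscale; simpl.
  repeat split; ring.
Qed.

Lemma det3_scale l m n x y z :
  det3 (vscale l x) (vscale m y) (vscale n z) = l * m * n * det3 x y z.
Proof. destruct x, y, z; unfold det3, dot, cross, vscale; simpl; ring. Qed.

Lemma lam (p V W : Z -> vec) k :
  proj_eq (V k) (p k) -> proj_eq (W k) (p k) ->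
  exists t, t <> 0 /\ W k = vscale t (V k).
Proof.
  intros [m [Hm HV]] [l [Hl HW]].
  exists (l / m); split.
  - unfold Rdiv; apply Rmult_integral_contrapositive; split; [auto|apply Rinv_neq_0_compat; auto].
  - rewrite HW, HV; destruct (p k); unfold vscale; simpl; f_equal; field; auto.
Qed.

Theorem mainTheorem13
  (N : Z) (M : mat) (p V W : Z -> vec) (a b c ah bh ch : Z -> R) :
  (5 <= N)%Z -> (N mod 3 <> 1)%Z ->
  mdet M = 1 ->
  twisted_spiral N M p ->
  generic_spiral p ->
  normalized_lift N M p V ->
  shifted_normalized_lift N M p W ->
  invariants V a b c ->
  invariants W ah bh ch ->
  forall i : Z, (0 <= i <= N - 2)%Z ->
    ch (i + 1)%Z + ah (i + 1)%Z * bh i = c (i + 1)%Z + a (i + 1)%Z * b i.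
Proof.
  intros HN _ _ _ _ [HpV [_ [_ HdV]]] [HpW [HdW _]] HiV HiW i Hi.
  destruct (lam p V W i (HpV _) (HpW _)) as [l0 [H0 E0]].
  destruct (lam p V W (i+1)%Z (HpV _) (HpW _)) as [l1 [H1 E1]].
  destruct (lam p V W (i+2)%Z (HpV _) (HpW _)) as [l2 [H2 E2]].
  destruct (lam p V W (i+3)%Z (HpV _) (HpW _)) as [l3 [H3 E3]].
  destruct (lam p V W (i+4)%Z (HpV _) (HpW _)) as [l4 [H4 E4]].
  assert (D0 : det3 (V i) (V (i+1)%Z) (V (i+2)%Z) = 1) by (apply HdV; lia).
  assert (D1 : det3 (V (i+1)%Z) (V (i+2)%Z) (V (i+3)%Z) = 1).
  { pose proof (HdV (i+1)%Z ltac:(lia)) as H.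
    replace (i+1+1)%Z with (i+2)%Z in H by lia.
    replace (i+1+2)%Z with (i+3)%Z in H by lia. exact H. }
  assert (D2 : det3 (V (i+2)%Z) (V (i+3)%Z) (V (i+4)%Z) = 1).
  { pose proof (HdV (i+2)%Z ltac:(lia)) as H.
    replace (i+2+1)%Z with (i+3)%Z in H by lia.
    replace (i+2+2)%Z with (i+4)%Z in H by lia. exact H. }
  assert (G1 : det3 (W (i+1)%Z) (W (i+2)%Z) (W (i+3)%Z) = 1).
  { pose proof (HdW (i+1)%Z ltac:(lia)) as H.
    replace (i+1+1)%Z with (i+2)%Z in H by lia.
    replace (i+1+2)%Z with (i+3)%Z in H by lia. exact H. }
  assert (G2 : det3 (W (i+2)%Z) (W (i+3)%Z) (W (i+4)%Z) = 1).
  { pose proof (HdW (i+2)%Z ltac:(lia)) as H.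
    replace (i+2+1)%Z with (i+3)%Z in H by lia.
    replace (i+2+2)%Z with (i+4)%Z in H by lia. exact H. }
  pose proof (HiV i) as Vi. pose proof (HiW i) as Wi.
  pose proof (HiV (i+1)%Z) as Vj. pose proof (HiW (i+1)%Z) as Wj.
  replace (i+1+3)%Z with (i+4)%Z in Vj, Wj by lia.
  replace (i+1+2)%Z with (i+3)%Z in Vj, Wj by lia.
  replace (i+1+1)%Z with (i+2)%Z in Vj, Wj by lia.
  apply key in Vi, Wi, Vj, Wj.
  destruct Vi as [Va [Vb _]]. destruct Wi as [Wa [Wb _]].
  destruct Vj as [Vja [_ Vjc]]. destruct Wj as [Wja [_ Wjc]].
  rewrite E0, E1, E2, E3, E4 in *.
  rewrite !det3_scale in *.
  rewrite D0 in Va, Vb. rewrite D1 in Vja, Vjc.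
  rewrite D1 in G1. rewrite D2 in G2.
  rewrite Va in Wa. rewrite Vb in Wb. rewrite Vja in Wja. rewrite Vjc in Wjc.
  assert (L : l4 = l1).
  { apply (Rmult_eq_reg_l (l2 * l3)); [|apply Rmult_integral_contrapositive; auto]. rewrite Rmult_1_r in G1, G2. transitivity 1; [rewrite <- G2; ring | rewrite <- G1; ring]. }
  subst l4.
  rewrite D0 in Wa, Wb. rewrite D1 in Wja, Wjc. rewrite !Rmult_1_r in Wa, Wb, Wja, Wjc.
  assert (Ec : ch (i+1)%Z = c (i+1)%Z).
  { apply (Rmult_eq_reg_l (l1*l2*l3)). rewrite Rmult_comm in Wjc. lra.
    repeat apply Rmult_integral_contrapositive; auto. }
  assert (Ea : ah (i+1)%Z = a (i+1)%Z * l1 / l3).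
  { apply (Rmult_eq_reg_l (l1*l2*l3)).
    field_simplify; auto. field_simplify in Wja; auto. nra.
    repeat apply Rmult_integral_contrapositive; auto. }
  assert (Eb : bh i = b i * l3 / l1).
  { apply (Rmult_eq_reg_l (l0*l1*l2)).
    field_simplify; auto. nra.
    repeat apply Rmult_integral_contrapositive; auto. }
  rewrite Ec, Ea, Eb. field. auto.
Qed.
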